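(* $F$ is bounded below (on $\{x\in\mathcal{X}:z\ge0\}$) and $r$ is bounded. $F$ and $r$ are Lipschitz continuous in $x$ with respect to $\|\cdot\|_{\mathcal{X}}$. Furthermore, $F$ and $r$ are Lipschitz continuous in $z$ with respect to $\|\cdot\|_{L^1(\Omega)}$.
   Context: Let $-\infty<t_0<t_E<\infty$, $\Omega=(t_0,t_E)$, points $t_1,\dots,t_M\in[t_0,t_E]$. $\mathcal{X}=(H^1(\Omega))^{n_y}\times(L^2(\Omega))^{n_z}$ with inner product $\sum_j\langle y_j,v_j\rangle_{H^1(\Omega)}+\sum_j\langle z_j,w_j\rangle_{L^2(\Omega)}$ and induced norm $\|\cdot\|_{\mathcal{X}}$; $x=(y,z)$. Given $f:\mathbb{R}^{n_y}\times\mathbb{R}^{n_y}\times\mathbb{R}^{n_z}\times\Omega\to\mathbb{R}$, $c:\mathbb{R}^{n_y}\times\mathbb{R}^{n_y}\times\mathbb{R}^{n_z}\times\Omega\to\mathbb{R}^{n_c}$, $b:(\mathbb{R}^{n_y})^M\to\mathbb{R}^{n_b}$, define $F(x)=\int_\Omega f(\dot y(t),y(t),z(t),t)dt$ and $r(x)=\int_\Omega\|c(\dot y(t),y(t),z(t),t)\|_2^2dt+\|b(y(t_1),\dots,y(t_M))\|_2^2$. Assumptions: (A.2) $\|c(\dot y(t),y(t),z(t),t)\|_1$ and $\|b(y(t_1),\dots,y(t_M))\|_1$ are bounded for all $x\in\mathcal{X}$ with $z\ge0$ and all $t\in\Omega$, and $F$ is bounded below on $\{x\in\mathcal{X}:z\ge0\}$.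 (A.3) $f,c,b$ are globally Lipschitz continuous in all arguments except $t$. *)

(* Defs.v *)
From HB Require Import structures.
From mathcomp Require Import all_boot all_order all_algebra.
From mathcomp Require Import all_classical all_reals all_analysis.
Set Implicit Arguments. Unset Strict Implicit. Unset Printing Implicit Defensive.
Import Order.TTheory GRing.Theory Num.Theory.
Local Open Scope classical_set_scope.
Local Open Scope ring_scope.

Section Defs.
Variable R : realType.

Definition lebR : measure _ _ := (@lebesgue_measure R).

Definition Omega (t0 tE : R) : set R := `]t0, tE[.

Definition vsub n (p q : 'I_n -> R) : 'I_n -> R := fun i => p i - q i.
Definition norm1 n (p : 'I_n -> R) : R := \sum_(i < n) `|p i|.
Definition sqnorm2 n (p : 'I_n -> R) : R := \sum_(i < n) p i ^+ 2.
Definition norm2 n (p : 'I_n -> R) : R := Num.sqrt (sqnorm2 p).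

Definition L2fun (t0 tE : R) (g : R -> R) : Prop :=
  measurable_fun (Omega t0 tE) g /\
  lebR.-integrable (Omega t0 tE) (fun t => (g t ^+ 2)%:E).

(* y in H^1(Omega): y is the (absolutely) continuous representative on
   [t0,tE] with weak derivative yd in L^2(Omega). *)
Definition H1fun (t0 tE : R) (y yd : R -> R) : Prop :=
  L2fun t0 tE yd /\
  forall t, t0 <= t <= tE -> y t = y t0 + Rintegral lebR `[t0, t] yd.

(* an element x = (y, z) of X, together with a representative ydot of dy/dt *)
Record Xel (ny nz : nat) := mkX {
  ys  : 'I_ny -> R -> R;
  yds : 'I_ny -> R -> R;
  zs  : 'I_nz -> R -> R }.

Definition inX (t0 tE : R) ny nz (x : Xel ny nz) : Prop :=
  (forall j, H1fun t0 tE (ys x j) (yds x j)) /\ (forall j, L2fun t0 tE (zs x j)).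

Definition znonneg (t0 tE : R) ny nz (x : Xel ny nz) : Prop :=
  forall j t, Omega t0 tE t -> 0 <= zs x j t.

Definition Xsub ny nz (x1 x2 : Xel ny nz) : Xel ny nz :=
  mkX (fun j t => ys x1 j t - ys x2 j t) (fun j t => yds x1 j t - yds x2 j t)
      (fun j t => zs x1 j t - zs x2 j t).

Definition L2sq (t0 tE : R) (g : R -> R) : R := Rintegral lebR (Omega t0 tE) (fun t => g t ^+ 2).

(* ||x||_X induced by sum_j <y_j,v_j>_{H^1} + sum_j <z_j,w_j>_{L^2} *)
Definition Xnorm (t0 tE : R) ny nz (x : Xel ny nz) : R :=
  Num.sqrt (\sum_(j < ny) (L2sq t0 tE (ys x j) + L2sq t0 tE (yds x j))
            + \sum_(j < nz) L2sq t0 tE (zs x j)).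

Definition L1normz (t0 tE : R) ny nz (x : Xel ny nz) : R :=
  \sum_(j < nz) Rintegral lebR (Omega t0 tE) (fun t => `|zs x j t|).

Definition yv ny nz (x : Xel ny nz) (t : R) : 'I_ny -> R := fun j => ys x j t.
Definition ydv ny nz (x : Xel ny nz) (t : R) : 'I_ny -> R := fun j => yds x j t.
Definition zv ny nz (x : Xel ny nz) (t : R) : 'I_nz -> R := fun j => zs x j t.

Definition Fobj (t0 tE : R) ny nz
  (f : ('I_ny -> R) -> ('I_ny -> R) -> ('I_nz -> R) -> R -> R) (x : Xel ny nz) : R :=
  Rintegral lebR (Omega t0 tE) (fun t => f (ydv x t) (yv x t) (zv x t) t).

Definition rres (t0 tE : R) ny nz nc nb M
  (c : ('I_ny -> R) -> ('I_ny -> R) -> ('I_nz -> R) -> R -> ('I_nc -> R))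
  (b : ('I_M -> ('I_ny -> R)) -> ('I_nb -> R)) (tp : 'I_M -> R)
  (x : Xel ny nz) : R :=
  Rintegral lebR (Omega t0 tE) (fun t => sqnorm2 (c (ydv x t) (yv x t) (zv x t) t))
  + sqnorm2 (b (fun i => yv x (tp i))).

End Defs.

(* Main.v *)
Require Import Defs.
From HB Require Import structures.
From mathcomp Require Import all_boot all_order all_algebra.
From mathcomp Require Import all_classical all_reals all_analysis.
Import Order.TTheory GRing.Theory Num.Theory.
Local Open Scope classical_set_scope.
Local Open Scope ring_scope.
From mathcomp Require Import ring lra measurable_realfun.


Lemma mOm {R : realType} (a b : R) : measurable (Omega a b).
Proof. exact: measurable_itv. Qed.

Lemma muOm {R : realType} (a b : R) : a < b -> lebR R (Omega a b) = (b - a)%:E.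
Proof. move=> ab. have := lebesgue_measure_itv `]a,b[. rewrite /= lte_fin ab -EFinD. exact. Qed.

Lemma fine_muOm {R : realType} (a b : R) : a < b -> fine (lebR R (Omega a b)) = b - a.
Proof. by move=> ab; rewrite muOm. Qed.

Lemma int_bnd {R : realType} (a b K : R) (g : R -> R) : a < b ->
  measurable_fun (Omega a b) g -> (forall t, Omega a b t -> `|g t| <= K) ->
  (lebR R).-integrable (Omega a b) (EFin \o g).
Proof.
move=> ab mg gK; apply: measurable_bounded_integrable => //.
- exact: mOm.
- by rewrite muOm // ltry.
- exists K; split; first exact: num_real.
  move=> x Kx y Dy; apply: le_trans (gK _ Dy) (ltW Kx).
Qed.

Lemma int_cst {R : realType} (a b k : R) : a < b ->
  (lebR R).-integrable (Omega a b) (EFin \o (fun _ => k)).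
Proof.
by move=> ab; apply: (@int_bnd _ _ _ `|k|).
Qed.


Lemma intD {d : measure_display} {T : measurableType d} {R : realType} (mu : {measure set T -> \bar R}) (D : set T) (f g : T -> R) : measurable D ->
  mu.-integrable D (EFin \o f) -> mu.-integrable D (EFin \o g) ->
  mu.-integrable D (EFin \o (fun t => f t + g t)).
Proof.
move=> mD hf hg; apply: eq_integrable (integrableD mD hf hg) => //.
Qed.
Lemma intB {d : measure_display} {T : measurableType d} {R : realType} (mu : {measure set T -> \bar R}) (D : set T) (f g : T -> R) : measurable D ->
  mu.-integrable D (EFin \o f) -> mu.-integrable D (EFin \o g) ->
  mu.-integrable D (EFin \o (fun t => f t - g t)).
Proof.
move=> mD hf hg; apply: eq_integrable (integrableB mD hf hg) => //.
Qed.
Lemma intZ {d : measure_display} {T : measurableType d} {R : realType} (mu : {measure set T -> \bar R}) (D : set T) (f : T -> R) k : measurable D ->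
  mu.-integrable D (EFin \o f) ->
  mu.-integrable D (EFin \o (fun t => k * f t)).
Proof.
move=> mD hf; apply: eq_integrable (integrableZl mD k hf) => //.
Qed.
Lemma intN {d : measure_display} {T : measurableType d} {R : realType} (mu : {measure set T -> \bar R}) (D : set T) (f : T -> R) : measurable D ->
  mu.-integrable D (EFin \o f) -> mu.-integrable D (EFin \o (fun t => `|f t|)).
Proof. by move=> mD hf; have := integrable_norm hf. Qed.

Lemma absle_sq1 {R : realType} (x : R) : `|x| <= x ^+ 2 + 1.
Proof. have [x0|x0] := leP 0 x; [rewrite ger0_norm // | rewrite ltr0_norm //]; nra. Qed.

Lemma L2_int {R : realType} (a b : R) g : a < b -> L2fun a b g ->
  (lebR R).-integrable (Omega a b) (EFin \o g).
Proof.
move=> ab [mg ig].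
have H := (@le_integrable _ _ _ (lebR R) _ (mOm a b) (EFin \o g) (EFin \o (fun t => g t ^+ 2 + 1))); apply: H.
- exact/measurable_EFinP.
- move=> x _ /=; rewrite lee_fin (ger0_norm (_ : 0 <= g x ^+ 2 + 1)).
    exact: absle_sq1.
  by rewrite addr_ge0 // sqr_ge0.
- by apply: intD => //; [exact: mOm | exact: int_cst].
Qed.

Lemma L2_intabs {R : realType} (a b : R) g : a < b -> L2fun a b g ->
  (lebR R).-integrable (Omega a b) (EFin \o (fun t => `|g t|)).
Proof. by move=> ab h; apply: intN; [exact: mOm| exact: L2_int]. Qed.

Lemma L2_sub {R : realType} (a b : R) g h : a < b -> L2fun a b g -> L2fun a b h ->
  L2fun a b (fun t => g t - h t).
Proof.
move=> ab [mg ig] [mh ih]; split; first exact: measurable_funB.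
have H := (@le_integrable _ _ _ (lebR R) _ (mOm a b) (EFin \o (fun t => (g t - h t) ^+ 2)) (EFin \o (fun t => 2 * g t ^+ 2 + 2 * h t ^+ 2))); apply: H.
- apply/measurable_EFinP; apply: measurable_funX; exact: measurable_funB.
- move=> x _ /=; rewrite lee_fin (ger0_norm (sqr_ge0 _)).
  rewrite ger0_norm; last by rewrite addr_ge0 // mulr_ge0 // sqr_ge0.
  have := sqr_ge0 (g x + h x); nra.
- by apply: intD; [exact: mOm | apply: intZ => //; exact: mOm ..].
Qed.


Lemma amgm_real {R : realType} (A B T : R) : 0 <= B -> 0 < T ->
  (forall l, 0 < l -> A <= (2 * l)^-1 * B + l / 2 * T) ->
  A <= Num.sqrt T * Num.sqrt B.
Proof.
move=> B0 T0 H.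
have q0 : 0 < Num.sqrt T by rewrite sqrtr_gt0.
have TE : T = Num.sqrt T ^+ 2 by rewrite sqr_sqrtr // ltW.
have BE : B = Num.sqrt B ^+ 2 by rewrite sqr_sqrtr.
have [Bz|Bp] := eqVneq B 0.
  rewrite Bz sqrtr0 mulr0; rewrite leNgt; apply/negP => A0.
  have := H (A / T) (divr_gt0 A0 T0); rewrite Bz mulr0 add0r.
  have -> : A / T / 2 * T = A / 2 by field; rewrite gt_eqF.
  lra.
have p0 : 0 < Num.sqrt B by rewrite sqrtr_gt0 lt_def Bp B0.
have := H (Num.sqrt B / Num.sqrt T) (divr_gt0 p0 q0).
move: TE BE p0 q0; set p := Num.sqrt B; set q := Num.sqrt T => TE BE p0 q0.
have -> : (2 * (p / q))^-1 * B + p / q / 2 * T = q * p.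
  rewrite BE TE; field.
  by rewrite !gt_eqF.
by [].
Qed.

Lemma absle_amgm {R : realType} (u l : R) : 0 < l -> `|u| <= (2 * l)^-1 * u ^+ 2 + l / 2.
Proof.
move=> l0; rewrite -(real_normK (num_real u)).
have : 0 <= (`|u| - l) ^+ 2 / (2 * l) by rewrite divr_ge0 ?sqr_ge0 // mulr_ge0 // ltW.
have -> : (`|u| - l) ^+ 2 / (2 * l) = (2 * l)^-1 * `|u| ^+ 2 + l / 2 - `|u|.
  by field; rewrite gt_eqF.
lra.
Qed.

Lemma L2_l1 {R : realType} (a b : R) g : a < b -> L2fun a b g ->
  Rintegral (lebR R) (Omega a b) (fun t => `|g t|) <= Num.sqrt (b - a) * Num.sqrt (L2sq a b g).
Proof.
move=> ab hg; apply: amgm_real.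
- by apply: Rintegral_ge0 => t _; exact: sqr_ge0.
- by rewrite subr_gt0.
move=> l l0.
have i2 := hg.2.
have i2' : (lebR R).-integrable (Omega a b) (EFin \o (fun t => (2 * l)^-1 * g t ^+ 2)).
  by apply: intZ => //; exact: mOm.
have ic := @int_cst _ a b (l / 2) ab.
apply: le_trans.
  apply: (@le_Rintegral _ _ _ (lebR R) _ _ (fun t => (2 * l)^-1 * g t ^+ 2 + l / 2)).
  - exact: mOm.
  - exact: L2_intabs.
  - by apply: intD => //; exact: mOm.
  - by move=> t _; exact: absle_amgm.
rewrite RintegralD //; last exact: mOm.
rewrite RintegralZl //; last exact: mOm.
rewrite Rintegral_cst; last exact: mOm.
by rewrite fine_muOm.
Qed.


Lemma int_oc {R : realType} (a b : R) g : a < b ->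
  (lebR R).-integrable (Omega a b) (EFin \o g) ->
  (lebR R).-integrable `[a, b] (EFin \o g).
Proof.
move=> ab /integrableP [mg ig]; apply/integrableP; split.
  apply/emeasurable_fun_itv_bndo_bndcP; apply/emeasurable_fun_itv_obnd_cbndP; exact: mg.
rewrite -integral_itv_bndo_bndc; last first.
  apply: measurableT_comp => //; apply/emeasurable_fun_itv_obnd_cbndP; exact: mg.
rewrite -integral_itv_obnd_cbnd //.
exact: measurableT_comp.
Qed.

Lemma Rint_oc {R : realType} (a b : R) g : a < b ->
  (lebR R).-integrable (Omega a b) (EFin \o g) ->
  Rintegral (lebR R) `[a, b] g = Rintegral (lebR R) (Omega a b) g.
Proof.
move=> ab ig; have icc := int_oc _ _ _ ab ig.
rewrite /Omega Rintegral_itv_obnd_cbnd // Rintegral_itv_bndo_bndc //.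
apply: integrableS icc => //; exact: subset_itv_co_cc.
Qed.


Lemma Om_cc {R : realType} (a b : R) : Omega a b `<=` `[a, b].
Proof. by move=> x; rewrite /Omega /= => /subset_itv_oo_cc. Qed.

Lemma Om_le {R : realType} (a b t : R) : Omega a b t -> a <= t <= b.
Proof. by rewrite /Omega /= in_itv /= => /andP[/ltW -> /ltW ->]. Qed.

Lemma H1_dev {R : realType} (a b : R) y yd : a < b -> H1fun a b y yd ->
  forall t, a <= t <= b -> `|y t - y a| <= Rintegral (lebR R) (Omega a b) (fun s => `|yd s|).
Proof.
move=> ab [hyd hy] t tab.
have iyd := int_oc _ _ _ ab (L2_int _ _ _ ab hyd).
have iayd := int_oc _ _ _ ab (L2_intabs _ _ _ ab hyd).
rewrite -Rint_oc //; last exact: L2_intabs.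
rewrite hy // addrC addKr.
have tab' : `[a, t] `<=` `[a, b].
  by apply: subset_itvl; rewrite bnd_simp; case/andP: tab.
apply: le_trans.
  apply: le_normr_Rintegral => //; apply: integrableS iyd => //.
have := @Rintegral_itvB _ (fun s => `|yd s|) (BLeft a) (BRight b) t iayd.
rewrite !bnd_simp; case/andP: tab => ha hb; move/(_ ha hb).
move=> E.
have : 0 <= Rintegral (lebR R) [set` Interval (BRight t) (BRight b)] (fun s => `|yd s|).
  by apply: Rintegral_ge0 => s _.
rewrite -E subr_ge0.
done.
Qed.

Lemma H1_L2 {R : realType} (a b : R) y yd : a < b -> H1fun a b y yd -> L2fun a b y.
Proof.
move=> ab hH; have [hyd hy] := hH.
have iyd := int_oc _ _ _ ab (L2_int _ _ _ ab hyd).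
have cont := parameterized_integral_continuous (ltW ab) iyd.
have mP : measurable_fun `[a, b] (fun x => parameterized_integral lebesgue_measure a x yd).
  exact: subspace_continuous_measurable_fun.
have my : measurable_fun `[a, b] y.
  apply: (eq_measurable_fun (fun x => y a + parameterized_integral lebesgue_measure a x yd)).
    move=> x; rewrite inE /= => xab; rewrite (hy x) //.
  by apply: measurable_funD => //; exact: measurable_cst.
have myO : measurable_fun (Omega a b) y.
  by apply: (measurable_funS _ (@Om_cc _ a b) my).
split => //.
set K := Rintegral (lebR R) (Omega a b) (fun s => `|yd s|).
apply: (@int_bnd _ _ _ ((`|y a| + K) ^+ 2)) => //.
  exact: measurable_funX.
move=> t Ot.
have h1 := H1_dev _ _ _ _ ab hH t (Om_le _ _ _ Ot); rewrite -/K in h1.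
have h2 : `|y t| <= `|y a| + K.
  have := ler_normD (y t - y a) (y a); rewrite subrK.
  move=> h; apply: le_trans h _; lra.
have h3 := normr_ge0 (y t).
rewrite normrX; nra.
Qed.

Lemma H1_sub {R : realType} (a b : R) y1 yd1 y2 yd2 : a < b ->
  H1fun a b y1 yd1 -> H1fun a b y2 yd2 ->
  H1fun a b (fun t => y1 t - y2 t) (fun t => yd1 t - yd2 t).
Proof.
move=> ab h1 h2; have [l1 r1] := h1; have [l2 r2] := h2.
split; first exact: L2_sub.
move=> t tab.
have i1 := int_oc _ _ _ ab (L2_int _ _ _ ab l1).
have i2 := int_oc _ _ _ ab (L2_int _ _ _ ab l2).
have tab' : `[a, t] `<=` `[a, b].
  by apply: subset_itvl; rewrite bnd_simp; case/andP: tab.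
rewrite RintegralB //; last first.
- by apply: integrableS i2.
- by apply: integrableS i1.
rewrite (r1 t tab) (r2 t tab); lra.
Qed.

Lemma H1_pt {R : realType} (a b : R) y yd s : a < b -> H1fun a b y yd -> a <= s <= b ->
  `|y s| <= (b - a)^-1 * Rintegral (lebR R) (Omega a b) (fun u => `|y u|)
            + 2 * Rintegral (lebR R) (Omega a b) (fun u => `|yd u|).
Proof.
move=> ab hH sab.
set K := Rintegral (lebR R) (Omega a b) (fun u => `|yd u|).
have hs := H1_dev _ _ _ _ ab hH s sab; rewrite -/K in hs.
have iy := L2_intabs _ _ _ ab (H1_L2 _ _ _ _ ab hH).
have ic := @int_cst _ a b (2 * K) ab.
have ic2 := @int_cst _ a b `|y s| ab.
have : Rintegral (lebR R) (Omega a b) (fun _ => `|y s|) <=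
       Rintegral (lebR R) (Omega a b) (fun u => `|y u| + 2 * K).
  apply: le_Rintegral => //; first exact: mOm.
    by apply: intD => //; exact: mOm.
  move=> u Ou.
  have hu := H1_dev _ _ _ _ ab hH u (Om_le _ _ _ Ou); rewrite -/K in hu.
  have := ler_normD (y s - y a) (y a - y u).
  have := ler_normD (y u) (y s - y u).
  rewrite (_ : y s - y a + (y a - y u) = y s - y u); last by ring.
  rewrite (_ : y u + (y s - y u) = y s); last by ring.
  rewrite (distrC (y a) (y u)).
  lra.
rewrite RintegralD //; [|exact: mOm].
rewrite !Rintegral_cst; [|exact: mOm..].
rewrite !fine_muOm //.
have T0 : 0 < b - a by rewrite subr_gt0.
move=> h.
rewrite -(@ler_pM2r _ (b - a)) //.
rewrite mulrDl mulrAC mulVf ?gt_eqF // mul1r.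
lra.
Qed.


Lemma Rint_sum {R : realType} (a b : R) n (h : 'I_n -> R -> R) : a < b ->
  (forall i, (lebR R).-integrable (Omega a b) (EFin \o h i)) ->
  (lebR R).-integrable (Omega a b) (EFin \o (fun t => \sum_(i < n) h i t)) /\
  Rintegral (lebR R) (Omega a b) (fun t => \sum_(i < n) h i t)
    = \sum_(i < n) Rintegral (lebR R) (Omega a b) (h i).
Proof.
move=> ab; elim: n h => [|n IH] h hi.
  have E : (fun t => \sum_(i < 0) h i t) = (fun _ => 0).
    by apply: funext => t; rewrite big_ord0.
  rewrite E big_ord0; split; first exact: int_cst.
  by rewrite Rintegral_cst ?mul0r //; exact: mOm.
have E : (fun t => \sum_(i < n.+1) h i t) =
   (fun t => \sum_(i < n) h (widen_ord (leqnSn n) i) t + h ord_max t).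
  by apply: funext => t; rewrite big_ord_recr.
have [i1 e1] := IH (fun i => h (widen_ord (leqnSn n) i)) (fun i => hi _).
rewrite E big_ord_recr /=; split.
  by apply: intD => //; exact: mOm.
by rewrite RintegralD //; [rewrite e1 | exact: mOm].
Qed.

Lemma sum_bnd {R : realType} n (F : 'I_n -> R) c : (forall j, F j <= c) ->
  \sum_(j < n) F j <= n%:R * c.
Proof.
move=> h; apply: le_trans (ler_sum _ (fun j _ => h j)) _.
by rewrite sumr_const card_ord mulr_natl.
Qed.

Lemma le_sum_term {R : realType} n (F : 'I_n -> R) j : (forall i, 0 <= F i) ->
  F j <= \sum_(i < n) F i.
Proof.
move=> h; rewrite (bigD1 j) //= lerDl; exact: sumr_ge0.
Qed.

Lemma lip3 {R : realType} (a b : R) n1 n2 n3 (g1 : 'I_n1 -> R -> R) (g2 : 'I_n2 -> R -> R)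
  (g3 : 'I_n3 -> R -> R) h1 h2 K : a < b ->
  (forall j, L2fun a b (g1 j)) -> (forall j, L2fun a b (g2 j)) -> (forall j, L2fun a b (g3 j)) ->
  (lebR R).-integrable (Omega a b) (EFin \o h1) -> (lebR R).-integrable (Omega a b) (EFin \o h2) ->
  0 <= K ->
  (forall t, Omega a b t -> `|h1 t - h2 t| <=
      K * (\sum_(j < n1) `|g1 j t| + \sum_(j < n2) `|g2 j t| + \sum_(j < n3) `|g3 j t|)) ->
  `|Rintegral (lebR R) (Omega a b) h1 - Rintegral (lebR R) (Omega a b) h2| <=
   K * (\sum_(j < n1) Rintegral (lebR R) (Omega a b) (fun t => `|g1 j t|)
      + \sum_(j < n2) Rintegral (lebR R) (Omega a b) (fun t => `|g2 j t|)
      + \sum_(j < n3) Rintegral (lebR R) (Omega a b) (fun t => `|g3 j t|)).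
Proof.
move=> ab G1 G2 G3 i1 i2 K0 H.
have mO := @mOm _ a b.
have [s1 e1] := Rint_sum _ _ _ (fun j t => `|g1 j t|) ab (fun j => L2_intabs _ _ _ ab (G1 j)).
have [s2 e2] := Rint_sum _ _ _ (fun j t => `|g2 j t|) ab (fun j => L2_intabs _ _ _ ab (G2 j)).
have [s3 e3] := Rint_sum _ _ _ (fun j t => `|g3 j t|) ab (fun j => L2_intabs _ _ _ ab (G3 j)).
rewrite -RintegralB //.
apply: le_trans; first by apply: le_normr_Rintegral => //; exact: intB.
apply: le_trans.
  apply: (@le_Rintegral _ _ _ (lebR R) _ _
    (fun t => K * (\sum_(j < n1) `|g1 j t| + \sum_(j < n2) `|g2 j t| + \sum_(j < n3) `|g3 j t|))) => //.
  - by apply: intN => //; exact: intB.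
  - by apply: intZ => //; apply: intD => //; apply: intD.
rewrite RintegralZl //; last by apply: intD => //; apply: intD.
rewrite RintegralD //; last by apply: intD.
rewrite RintegralD //.
by rewrite e1 e2 e3.
Qed.


Lemma norm1_ge0 {R : realType} n (p : 'I_n -> R) : 0 <= norm1 p.
Proof. by apply: sumr_ge0 => i _. Qed.

Lemma sqnorm2_ge0 {R : realType} n (p : 'I_n -> R) : 0 <= sqnorm2 p.
Proof. by apply: sumr_ge0 => i _; exact: sqr_ge0. Qed.

Lemma norm2_ge0 {R : realType} n (p : 'I_n -> R) : 0 <= norm2 p.
Proof. exact: sqrtr_ge0. Qed.

Lemma sq_le_norm1 {R : realType} n (p : 'I_n -> R) : sqnorm2 p <= norm1 p ^+ 2.
Proof.
rewrite /sqnorm2 /norm1; elim: n p => [|n IH] p; first by rewrite !big_ord0 expr0n.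
rewrite !big_ord_recr /=.
have h := IH (fun i => p (widen_ord (leqnSn n) i)).
have h0 : 0 <= \sum_(i < n) `|p (widen_ord (leqnSn n) i)| by apply: sumr_ge0.
have h1 := normr_ge0 (p ord_max).
rewrite -[p ord_max ^+ 2](real_normK (num_real _)).
nra.
Qed.

Lemma norm2_le1 {R : realType} n (p : 'I_n -> R) : norm2 p <= norm1 p.
Proof.
rewrite /norm2 -[X in _ <= X](ger0_norm (norm1_ge0 _ p)) -sqrtr_sqr ler_sqrt.
  exact: sq_le_norm1.
by rewrite sqr_ge0.
Qed.

Lemma comp_le_norm2 {R : realType} n (p : 'I_n -> R) k : `|p k| <= norm2 p.
Proof.
rewrite /norm2 -sqrtr_sqr ler_sqrt; last exact: sqnorm2_ge0.
by apply: (le_sum_term _ (fun i => p i ^+ 2)) => i; exact: sqr_ge0.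
Qed.

Lemma sq_diff {R : realType} n (u v : 'I_n -> R) :
  `|sqnorm2 u - sqnorm2 v| <= (norm1 u + norm1 v) * norm2 (vsub u v).
Proof.
rewrite /sqnorm2 -sumrB /norm1 -big_split /= mulr_suml.
apply: le_trans (ler_norm_sum _ _ _) _.
apply: ler_sum => k _.
have h := comp_le_norm2 _ (vsub u v) k; rewrite /vsub in h.
rewrite (_ : u k ^+ 2 - v k ^+ 2 = (u k - v k) * (u k + v k)); last by ring.
rewrite normrM mulrC.
apply: ler_pM => //.
exact: ler_normD.
Qed.

Lemma sqnorm2_le {R : realType} n (p : 'I_n -> R) C : norm1 p <= C -> sqnorm2 p <= C ^+ 2.
Proof.
move=> h; apply: le_trans (sq_le_norm1 _ p) _.
have := norm1_ge0 _ p; nra.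
Qed.


Lemma L2sq_ge0 {R : realType} (a b : R) g : 0 <= L2sq a b g.
Proof. by apply: Rintegral_ge0 => t _; exact: sqr_ge0. Qed.

Lemma Xb1 {R : realType} (a b : R) g S : a < b -> L2fun a b g -> L2sq a b g <= S ->
  Rintegral (lebR R) (Omega a b) (fun t => `|g t|) <= Num.sqrt (b - a) * Num.sqrt S.
Proof.
move=> ab hg hS; apply: le_trans (L2_l1 _ _ _ ab hg) _.
apply: ler_wpM2l; first exact: sqrtr_ge0.
by rewrite ler_sqrt // (le_trans (L2sq_ge0 a b g)).
Qed.

Lemma Xnorm_bnd {R : realType} (a b : R) ny nz (x : Xel R ny nz) : a < b ->
  (forall j, L2fun a b (ys x j)) -> (forall j, L2fun a b (yds x j)) -> (forall j, L2fun a b (zs x j)) ->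
  [/\ (forall j, Rintegral (lebR R) (Omega a b) (fun t => `|ys x j t|) <= Num.sqrt (b - a) * Xnorm a b x),
      (forall j, Rintegral (lebR R) (Omega a b) (fun t => `|yds x j t|) <= Num.sqrt (b - a) * Xnorm a b x) &
      (forall j, Rintegral (lebR R) (Omega a b) (fun t => `|zs x j t|) <= Num.sqrt (b - a) * Xnorm a b x)].
Proof.
move=> ab hy hyd hz.
set S1 := \sum_(j < ny) (L2sq a b (ys x j) + L2sq a b (yds x j)).
set S2 := \sum_(j < nz) L2sq a b (zs x j).
have S10 : 0 <= S1 by apply: sumr_ge0 => j _; rewrite addr_ge0 // L2sq_ge0.
have S20 : 0 <= S2 by apply: sumr_ge0 => j _; rewrite L2sq_ge0.
have k1 : forall j, L2sq a b (ys x j) + L2sq a b (yds x j) <= S1.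
  move=> j; apply: (le_sum_term _ (fun j => L2sq a b (ys x j) + L2sq a b (yds x j))).
  by move=> i; rewrite addr_ge0 // L2sq_ge0.
split => j; apply: Xb1 => //; rewrite -/S1 -/S2.
- have := k1 j; have := L2sq_ge0 a b (yds x j); lra.
- have := k1 j; have := L2sq_ge0 a b (ys x j); lra.
- have h : L2sq a b (zs x j) <= S2.
    exact: (le_sum_term _ (fun j => L2sq a b (zs x j)) j (fun i => L2sq_ge0 a b (zs x i))).
  lra.
Qed.

Lemma norm2_vsub0 {R : realType} n (p : 'I_n -> R) : norm2 (vsub p p) = 0.
Proof.
rewrite /norm2 /sqnorm2 /vsub big1 ?sqrtr0 // => i _; by rewrite subrr expr0n.
Qed.

Theorem mainTheorem20 (R : realType) (t0 tE : R) (ny nz nc nb M : nat)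
  (tp : 'I_M -> R)
  (f : ('I_ny -> R) -> ('I_ny -> R) -> ('I_nz -> R) -> R -> R)
  (c : ('I_ny -> R) -> ('I_ny -> R) -> ('I_nz -> R) -> R -> ('I_nc -> R))
  (b : ('I_M -> ('I_ny -> R)) -> ('I_nb -> R)) :
  t0 < tE ->
  (forall i, t0 <= tp i <= tE) ->
  (* well-definedness of F and r on X (implicit in the paper) *)
  (forall x : Xel R ny nz, inX t0 tE x ->
     (lebR R).-integrable (Omega t0 tE) (fun t => (f (ydv x t) (yv x t) (zv x t) t)%:E)) ->
  (forall x : Xel R ny nz, inX t0 tE x -> forall k,
     measurable_fun (Omega t0 tE) (fun t => c (ydv x t) (yv x t) (zv x t) t k)) ->
  (* (A.2) *)
  (exists C, forall x : Xel R ny nz, inX t0 tE x -> znonneg t0 tE x ->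
     forall t, Omega t0 tE t -> norm1 (c (ydv x t) (yv x t) (zv x t) t) <= C) ->
  (exists C, forall x : Xel R ny nz, inX t0 tE x -> znonneg t0 tE x ->
     norm1 (b (fun i => yv x (tp i))) <= C) ->
  (exists m, forall x : Xel R ny nz, inX t0 tE x -> znonneg t0 tE x ->
     m <= Fobj t0 tE f x) ->
  (* (A.3) *)
  (exists L, forall p q w p' q' w' t, Omega t0 tE t ->
     `|f p q w t - f p' q' w' t|
       <= L * (norm2 (vsub p p') + norm2 (vsub q q') + norm2 (vsub w w'))) ->
  (exists L, forall p q w p' q' w' t, Omega t0 tE t ->
     norm2 (vsub (c p q w t) (c p' q' w' t))
       <= L * (norm2 (vsub p p') + norm2 (vsub q q') + norm2 (vsub w w'))) ->
  (exists L, forall P P' : 'I_M -> 'I_ny -> R,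
     norm2 (vsub (b P) (b P')) <= L * \sum_(i < M) norm2 (vsub (P i) (P' i))) ->
  (* conclusions *)
  (exists m, forall x : Xel R ny nz, inX t0 tE x -> znonneg t0 tE x ->
     m <= Fobj t0 tE f x) /\
  (exists C, forall x : Xel R ny nz, inX t0 tE x -> znonneg t0 tE x ->
     `|rres t0 tE c b tp x| <= C) /\
  (exists L, forall x1 x2 : Xel R ny nz, inX t0 tE x1 -> inX t0 tE x2 ->
     `|Fobj t0 tE f x1 - Fobj t0 tE f x2| <= L * Xnorm t0 tE (Xsub x1 x2)) /\
  (exists L, forall x1 x2 : Xel R ny nz, inX t0 tE x1 -> inX t0 tE x2 ->
     znonneg t0 tE x1 -> znonneg t0 tE x2 ->
     `|rres t0 tE c b tp x1 - rres t0 tE c b tp x2| <= L * Xnorm t0 tE (Xsub x1 x2)) /\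
  (exists L, forall x1 x2 : Xel R ny nz, inX t0 tE x1 -> inX t0 tE x2 ->
     ys x1 = ys x2 -> yds x1 = yds x2 ->
     `|Fobj t0 tE f x1 - Fobj t0 tE f x2| <= L * L1normz t0 tE (Xsub x1 x2)) /\
  (exists L, forall x1 x2 : Xel R ny nz, inX t0 tE x1 -> inX t0 tE x2 ->
     znonneg t0 tE x1 -> znonneg t0 tE x2 ->
     ys x1 = ys x2 -> yds x1 = yds x2 ->
     `|rres t0 tE c b tp x1 - rres t0 tE c b tp x2| <= L * L1normz t0 tE (Xsub x1 x2)).
Proof.
move=> ab htp hFint hcm [Cc hC] [Cb hB] hlow [Lf hf] [Lc hc] [Lb hb].
have mO := @mOm _ t0 tE.
have T0 : 0 < tE - t0 by rewrite subr_gt0.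
have Xf : forall x1 x2 : Xel R ny nz, inX t0 tE x1 -> inX t0 tE x2 ->
   [/\ (forall j, H1fun t0 tE (ys (Xsub x1 x2) j) (yds (Xsub x1 x2) j)),
       (forall j, L2fun t0 tE (ys (Xsub x1 x2) j)),
       (forall j, L2fun t0 tE (yds (Xsub x1 x2) j)) &
       (forall j, L2fun t0 tE (zs (Xsub x1 x2) j))].
  move=> x1 x2 [hy1 hz1] [hy2 hz2].
  have hH : forall j, H1fun t0 tE (ys (Xsub x1 x2) j) (yds (Xsub x1 x2) j).
    by move=> j; exact: (H1_sub _ _ _ _ _ _ ab (hy1 j) (hy2 j)).
  split => // j; [exact: (H1_L2 _ _ _ _ ab (hH j)) | exact: (hH j).1 | exact: L2_sub].
have sqci : forall x : Xel R ny nz, inX t0 tE x -> znonneg t0 tE x ->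
   (lebR R).-integrable (Omega t0 tE) (EFin \o (fun t => sqnorm2 (c (ydv x t) (yv x t) (zv x t) t))).
  move=> x hx hn.
  have := (Rint_sum _ _ _ (fun k t => c (ydv x t) (yv x t) (zv x t) t k ^+ 2) ab _).1; apply.
  move=> k; apply: (@int_bnd _ _ _ (Cc ^+ 2)) => //.
    exact: measurable_funX (hcm x hx k).
  move=> t Ot; rewrite normrX.
  have h1 := comp_le_norm2 _ (c (ydv x t) (yv x t) (zv x t) t) k.
  have h2 := norm2_le1 _ (c (ydv x t) (yv x t) (zv x t) t).
  have h3 := hC x hx hn t Ot.
  have h4 := normr_ge0 (c (ydv x t) (yv x t) (zv x t) t k).
  nra.
split; first exact: hlow.
split.
  exists (Cc ^+ 2 * (tE - t0) + Cb ^+ 2) => x hx hn; rewrite /rres.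
  have A0 : 0 <= Rintegral (lebR R) (Omega t0 tE) (fun t => sqnorm2 (c (ydv x t) (yv x t) (zv x t) t)).
    by apply: Rintegral_ge0 => t _; exact: sqnorm2_ge0.
  have A1 : Rintegral (lebR R) (Omega t0 tE) (fun t => sqnorm2 (c (ydv x t) (yv x t) (zv x t) t))
     <= Cc ^+ 2 * (tE - t0).
    apply: le_trans.
      apply: (@le_Rintegral _ _ _ (lebR R) _ _ (fun _ => Cc ^+ 2)) => //.
      - exact: sqci.
      - exact: int_cst.
      - move=> t Ot; apply: sqnorm2_le; exact: hC.
    by rewrite Rintegral_cst // fine_muOm.
  have B0 := sqnorm2_ge0 _ (b (fun i => yv x (tp i))).
  have B1 := sqnorm2_le _ _ _ (hB x hx hn).
  rewrite ger0_norm ?addr_ge0 //; lra.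
split.
  exists (`|Lf| * ((ny + ny + nz)%:R * Num.sqrt (tE - t0))) => x1 x2 h1 h2.
  have [H1s Ly Lyd Lz] := Xf x1 x2 h1 h2.
  have [By Byd Bz] := Xnorm_bnd _ _ _ _ (Xsub x1 x2) ab Ly Lyd Lz.
  rewrite /Fobj.
  apply: le_trans.
    apply: (lip3 _ _ _ _ _ (yds (Xsub x1 x2)) (ys (Xsub x1 x2)) (zs (Xsub x1 x2)) _ _ `|Lf| ab Lyd Ly Lz (hFint x1 h1) (hFint x2 h2) (normr_ge0 _)).
    move=> t Ot; apply: le_trans (hf _ _ _ _ _ _ t Ot) _.
    apply: le_trans.
      apply: ler_wpM2r; last exact: (ler_norm Lf).
      by rewrite !addr_ge0 // norm2_ge0.
    apply: ler_wpM2l; first exact: normr_ge0.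
    apply: lerD; first apply: lerD; exact: norm2_le1.
  rewrite -mulrA; apply: ler_wpM2l; first exact: normr_ge0.
  set X := Xnorm t0 tE (Xsub x1 x2).
  have e : (ny + ny + nz)%:R * Num.sqrt (tE - t0) * X =
     ny%:R * (Num.sqrt (tE - t0) * X) + ny%:R * (Num.sqrt (tE - t0) * X) + nz%:R * (Num.sqrt (tE - t0) * X).
    by rewrite !natrD; ring.
  rewrite e.
  by apply: lerD; first apply: lerD; apply: sum_bnd.
split.
  exists (2 * `|Cc| * `|Lc| * ((ny + ny + nz)%:R * Num.sqrt (tE - t0)) +
          2 * `|Cb| * `|Lb| * (M%:R * (ny%:R * ((tE - t0)^-1 * Num.sqrt (tE - t0) + 2 * Num.sqrt (tE - t0))))).
  move=> x1 x2 h1 h2 n1 n2.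
  have [H1s Ly Lyd Lz] := Xf x1 x2 h1 h2.
  have [By Byd Bz] := Xnorm_bnd _ _ _ _ (Xsub x1 x2) ab Ly Lyd Lz.
  set X := Xnorm t0 tE (Xsub x1 x2).
  set sT := Num.sqrt (tE - t0).
  have X0 : 0 <= X by exact: sqrtr_ge0.
  have sT0 : 0 <= sT by exact: sqrtr_ge0.
  rewrite /rres.
  set A1 := Rintegral (lebR R) (Omega t0 tE) (fun t => sqnorm2 (c (ydv x1 t) (yv x1 t) (zv x1 t) t)).
  set A2 := Rintegral (lebR R) (Omega t0 tE) (fun t => sqnorm2 (c (ydv x2 t) (yv x2 t) (zv x2 t) t)).
  set B1 := sqnorm2 (b (fun i => yv x1 (tp i))).
  set B2 := sqnorm2 (b (fun i => yv x2 (tp i))).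
  rewrite (_ : A1 + B1 - (A2 + B2) = (A1 - A2) + (B1 - B2)); last by ring.
  apply: le_trans (ler_normD _ _) _; rewrite mulrDl; apply: lerD.
    apply: le_trans.
      apply: (lip3 _ _ _ _ _ (yds (Xsub x1 x2)) (ys (Xsub x1 x2)) (zs (Xsub x1 x2)) _ _ (2 * `|Cc| * `|Lc|) ab Lyd Ly Lz (sqci x1 h1 n1) (sqci x2 h2 n2)).
        by rewrite !mulr_ge0.
      move=> t Ot; apply: le_trans (sq_diff _ _ _) _.
      have hc1 := hC x1 h1 n1 t Ot.
      have hc2 := hC x2 h2 n2 t Ot.
      have hl := hc (ydv x1 t) (yv x1 t) (zv x1 t) (ydv x2 t) (yv x2 t) (zv x2 t) t Ot.
      set N := norm2 (vsub _ _) in hl *.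
      have N0 : 0 <= N by exact: norm2_ge0.
      set P := _ + _ + norm2 _ in hl.
      have P0 : 0 <= P by rewrite !addr_ge0 // norm2_ge0.
      have hP : P <= \sum_(j < ny) `|yds (Xsub x1 x2) j t| + \sum_(j < ny) `|ys (Xsub x1 x2) j t| + \sum_(j < nz) `|zs (Xsub x1 x2) j t|.
        by apply: lerD; first apply: lerD; exact: norm2_le1.
      have hl' : N <= `|Lc| * P.
        apply: le_trans hl _; apply: ler_wpM2r => //; exact: ler_norm.
      apply: le_trans (_ : _ <= (2 * `|Cc|) * N) _.
        apply: ler_wpM2r => //.
        have := ler_norm Cc; lra.
      rewrite -[2 * `|Cc| * `|Lc| * _]mulrA; apply: ler_wpM2l; first by rewrite mulr_ge0.
      apply: le_trans hl' _; apply: ler_wpM2l => //.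
    rewrite -[2 * `|Cc| * `|Lc| * _ * X]mulrA; apply: ler_wpM2l; first by rewrite !mulr_ge0.
    have e : (ny + ny + nz)%:R * sT * X =
       ny%:R * (sT * X) + ny%:R * (sT * X) + nz%:R * (sT * X).
      by rewrite !natrD; ring.
    rewrite e.
    by apply: lerD; first apply: lerD; apply: sum_bnd.
  have hb1 := hB x1 h1 n1.
  have hb2 := hB x2 h2 n2.
  set Y := \sum_(i < M) norm2 (vsub (yv x1 (tp i)) (yv x2 (tp i))).
  have Y0 : 0 <= Y by apply: sumr_ge0 => i _; exact: norm2_ge0.
  have hY : Y <= M%:R * (ny%:R * ((tE - t0)^-1 * (sT * X) + 2 * (sT * X))).
    apply: sum_bnd => i; apply: le_trans (norm2_le1 _ _) _; apply: sum_bnd => j.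
    apply: le_trans (H1_pt _ _ _ _ (tp i) ab (H1s j) (htp i)) _.
    apply: lerD.
      by apply: ler_wpM2l; [rewrite invr_ge0 ltW | exact: By].
    by apply: ler_wpM2l => //; exact: Byd.
  have hN := hb (fun i => yv x1 (tp i)) (fun i => yv x2 (tp i)).
  rewrite -/Y in hN.
  apply: le_trans (sq_diff _ _ _) _.
  set N := norm2 (vsub _ _) in hN *.
  have N0 : 0 <= N by exact: norm2_ge0.
  have hN' : N <= `|Lb| * (M%:R * (ny%:R * ((tE - t0)^-1 * (sT * X) + 2 * (sT * X)))).
    apply: le_trans hN _; apply: le_trans (_ : _ <= `|Lb| * Y) _.
      by apply: ler_wpM2r => //; exact: ler_norm.
    by apply: ler_wpM2l.
  apply: le_trans (_ : _ <= (2 * `|Cb|) * N) _.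
    apply: ler_wpM2r => //.
    have := ler_norm Cb; lra.
  apply: le_trans (_ : _ <= (2 * `|Cb|) * (`|Lb| * (M%:R * (ny%:R * ((tE - t0)^-1 * (sT * X) + 2 * (sT * X)))))) _.
    by apply: ler_wpM2l => //; rewrite mulr_ge0.
  by rewrite le_eqVlt; apply/orP; left; apply/eqP; ring.
have L0 : forall j : 'I_0, L2fun t0 tE (fun _ => 0) by case.
split.
  exists `|Lf| => x1 x2 h1 h2 ey eyd.
  have [_ _ _ Lz] := Xf x1 x2 h1 h2.
  rewrite /Fobj.
  apply: le_trans.
    apply: (lip3 _ _ 0 0 _ (fun _ _ => 0) (fun _ _ => 0) (zs (Xsub x1 x2)) _ _ `|Lf| ab L0 L0 Lz (hFint x1 h1) (hFint x2 h2) (normr_ge0 _)).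
    move=> t Ot; rewrite !big_ord0 !add0r.
    apply: le_trans (hf _ _ _ _ _ _ t Ot) _.
    have e1 : norm2 (vsub (ydv x1 t) (ydv x2 t)) = 0 by rewrite /ydv eyd norm2_vsub0.
    have e2 : norm2 (vsub (yv x1 t) (yv x2 t)) = 0 by rewrite /yv ey norm2_vsub0.
    rewrite e1 e2 !add0r.
    apply: le_trans (ler_wpM2r (norm2_ge0 _ _) (ler_norm Lf)) _.
    apply: ler_wpM2l; first exact: normr_ge0.
    exact: norm2_le1.
  by rewrite !big_ord0 !add0r.
exists (2 * `|Cc| * `|Lc|) => x1 x2 h1 h2 n1 n2 ey eyd.
have [_ _ _ Lz] := Xf x1 x2 h1 h2.
rewrite /rres.
have eB : b (fun i => yv x1 (tp i)) = b (fun i => yv x2 (tp i)) by rewrite /yv ey.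
rewrite eB.
set A1 := Rintegral (lebR R) (Omega t0 tE) (fun t => sqnorm2 (c (ydv x1 t) (yv x1 t) (zv x1 t) t)).
set A2 := Rintegral (lebR R) (Omega t0 tE) (fun t => sqnorm2 (c (ydv x2 t) (yv x2 t) (zv x2 t) t)).
set B := sqnorm2 _.
rewrite (_ : A1 + B - (A2 + B) = A1 - A2); last by ring.
apply: le_trans.
  apply: (lip3 _ _ 0 0 _ (fun _ _ => 0) (fun _ _ => 0) (zs (Xsub x1 x2)) _ _ (2 * `|Cc| * `|Lc|) ab L0 L0 Lz (sqci x1 h1 n1) (sqci x2 h2 n2)).
    by rewrite !mulr_ge0.
  move=> t Ot; rewrite !big_ord0 !add0r.
  apply: le_trans (sq_diff _ _ _) _.
  have hc1 := hC x1 h1 n1 t Ot.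
  have hc2 := hC x2 h2 n2 t Ot.
  have hl := hc (ydv x1 t) (yv x1 t) (zv x1 t) (ydv x2 t) (yv x2 t) (zv x2 t) t Ot.
  have e1 : norm2 (vsub (ydv x1 t) (ydv x2 t)) = 0 by rewrite /ydv eyd norm2_vsub0.
  have e2 : norm2 (vsub (yv x1 t) (yv x2 t)) = 0 by rewrite /yv ey norm2_vsub0.
  rewrite e1 e2 !add0r in hl.
  set N := norm2 (vsub _ _) in hl *.
  have N0 : 0 <= N by exact: norm2_ge0.
  have hl' : N <= `|Lc| * \sum_(j < nz) `|zs (Xsub x1 x2) j t|.
    apply: le_trans hl _; apply: le_trans (ler_wpM2r (norm2_ge0 _ _) (ler_norm Lc)) _.
    apply: ler_wpM2l; first exact: normr_ge0.
    exact: norm2_le1.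
  apply: le_trans (_ : _ <= (2 * `|Cc|) * N) _.
    apply: ler_wpM2r => //.
    have := ler_norm Cc; lra.
  rewrite -[2 * `|Cc| * `|Lc| * _]mulrA; apply: ler_wpM2l; first by rewrite mulr_ge0.
  exact: hl'.
by rewrite !big_ord0 !add0r.
Qed.
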